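(* The set $\Gamma_{\mathcal{T}}$ of all finite branches that are not refutable in the tableau calculus $\mathcal{T}$ is an abstract consistency class.
   Context: Types: a countable set of base types including a distinguished $o$; other base types are sorts ($\alpha$). Types: base types and $\sigma\tau$ (functions from $\sigma$ to $\tau$; $\sigma\tau\mu=\sigma(\tau\mu)$). Countably many names, each with a unique type, infinitely many of each type. Terms: names; $st:\mu$ for $s:\tau\mu,t:\tau$; $\lambda x.t:\sigma\tau$ for a name $x:\sigma$, $t:\tau$. Logical constants: $\neg:oo$, $=_\sigma:\sigma\sigma o$; other names are variables. Formulas: terms of type $o$; $s=_\sigma t$ is $(=_\sigma s)t$; $s\neq_\sigma t$ is $\neg(s=_\sigma t)$. A fixed type-preserving total normalization operator $[\cdot]$ on terms is given; $s$ is normal iff $[s]=s$; $[[s]]=[s]$, $[[s]t]=[st]$, and $[xs_1\dots s_n]=x[s_1]\dots[s_n]$ for every name $x$, $n\ge0$, with $xs_1\dots s_n$ of base type. A branch is a set of normal formulas. Tableau calculus $\mathcal{T}$: a rule instance $A/A_1\dots A_n$ has $A$ a finite branch containing the premises, $A_i=A\cup$(formulas of the $i$-th alternative). Rules ($x$ a variable): (DN) $\neg\neg s$ / $s$. (BQ) $s=_ot$ / $\{s,t\}\mid\{\neg s,\neg t\}$. (BE) $s\neq_o t$ / $\{s,\neg t\}\mid\{\neg s,t\}$. (FQ) $s=_{\sigma\tau}t$ / $[su]=[tu]$, $u:\sigma$ normal. (FE) $s\neq_{\sigma\tau}t$ / $[sx]\neq[tx]$, $x:\sigma$ not free in $A$.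 (Mat) $xs_1\dots s_n,\neg xt_1\dots t_n$ / $s_1\neq t_1\mid\dots\mid s_n\neq t_n$ ($n\ge0$). (Dec) $xs_1\dots s_n\neq_\alpha xt_1\dots t_n$ / $s_1\neq t_1\mid\dots\mid s_n\neq t_n$ ($n\ge0$). (Con) $s=_\alpha t,u\neq_\alpha v$ / $\{s\neq u,t\neq u\}\mid\{s\neq v,t\neq v\}$. $A$ is closed if $x,\neg x\in A$ for a variable $x:o$ or $x\neq_\alpha x\in A$ for a variable $x:\alpha$. Restrictions: (1) instances with $A$ closed are admitted only for Mat or Dec with $n=0$; (2) FE on $s\neq t\in A$ only if no variable $x$ has $[sx]\neq[tx]\in A$. Refutable: least set of branches such that if $A/A_1\dots A_n$ is an admitted instance and all $A_i$ are refutable then $A$ is refutable. An abstract consistency class is a set $\Gamma$ of branches such that every $A\in\Gamma$ satisfies: (DN) if $\neg\neg s\in A$ then $A\cup\{s\}\in\Gamma$; (BQ) if $s=_ot\in A$ then $A\cup\{s,t\}\in\Gamma$ or $A\cup\{\neg s,\neg t\}\in\Gamma$; (BE) if $s\neq_ot\in A$ then $A\cup\{s,\neg t\}\in\Gamma$ or $A\cup\{\neg s,t\}\in\Gamma$; (FQ) if $s=_{\sigma\tau}t\in A$ then $A\cup\{[su]=[tu]\}\in\Gamma$ for every normal $u:\sigma$; (FE) if $s\neq_{\sigma\tau}t\in A$ then $A\cup\{[sx]\neq[tx]\}\in\Gamma$ for some variable $x$; (Mat) if $xs_1\dots s_n,\neg xt_1\dots t_n\in A$ then $n\ge1$ and $A\cup\{s_i\neq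 t_i\}\in\Gamma$ for some $i$; (Dec) if $xs_1\dots s_n\neq_\alpha xt_1\dots t_n\in A$ then $n\ge1$ and $A\cup\{s_i\neq t_i\}\in\Gamma$ for some $i$; (Con) if $s=_\alpha t,u\neq_\alpha v\in A$ then $A\cup\{s\neq u,t\neq u\}\in\Gamma$ or $A\cup\{s\neq v,t\neq v\}\in\Gamma$. *)

(* Defs.v *)
From mathcomp Require Import ssreflect ssrfun ssrbool eqtype choice.
From Stdlib Require Import List.
Set Implicit Arguments.
Unset Strict Implicit.

Inductive ty (B : Type) : Type :=
| Base : B -> ty B
| Arr  : ty B -> ty B -> ty B.
Arguments Base {B} b.
Arguments Arr {B} s t.

Inductive tm (N : Type) : Type :=
| Nm : N -> tm N
| Ap : tm N -> tm N -> tm N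
| Lm : N -> tm N -> tm N.
Arguments Nm {N} x.
Arguments Ap {N} s t.
Arguments Lm {N} x t.

Section Setting.
Context {B : Type} (o : B) {N : Type} (nty : N -> ty B) (neg : N)
        (eqn : ty B -> N) (nf : tm N -> tm N).

Fixpoint arrows (l : list (ty B)) (b : ty B) : ty B :=
  match l with nil => b | a :: l' => Arr a (arrows l' b) end.

Definition apps (h : tm N) (l : list (tm N)) : tm N :=
  fold_left (fun h s => Ap h s) l h.

Inductive has_ty : tm N -> ty B -> Prop :=
| ty_nm x : has_ty (Nm x) (nty x)
| ty_ap s t T U : has_ty s (Arr T U) -> has_ty t T -> has_ty (Ap s t) U
| ty_lm x t U : has_ty t U -> has_ty (Lm x t) (Arr (nty x) U).

Definition isvar (x : N) : Prop := x <> neg /\ forall T, x <> eqn T.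

Fixpoint free (x : N) (t : tm N) : Prop :=
  match t with
  | Nm y => x = y
  | Ap s u => free x s \/ free x u
  | Lm y u => x <> y /\ free x u
  end.

Definition mkneg (s : tm N) : tm N := Ap (Nm neg) s.
Definition mkeq (T : ty B) (s t : tm N) : tm N := Ap (Ap (Nm (eqn T)) s) t.
Definition mkneq (T : ty B) (s t : tm N) : tm N := mkneg (mkeq T s t).

Definition normal (s : tm N) : Prop := nf s = s.

Definition branch := tm N -> Prop.
Definition is_branch (A : branch) : Prop :=
  forall s, A s -> has_ty s (Base o) /\ normal s.
Definition finite (A : branch) : Prop :=
  exists l : list (tm N), forall s, A s <-> In s l.
Definition fin_branch (A : branch) : Prop := is_branch A /\ finite A.

Definition ext (A : branch) (F : list (tm N)) : branch :=
  fun u => A u \/ In u F.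

Definition sort (a : B) : Prop := a <> o.

Definition closed (A : branch) : Prop :=
  (exists x, isvar x /\ nty x = Base o /\ A (Nm x) /\ A (mkneg (Nm x))) \/
  (exists x a, isvar x /\ sort a /\ nty x = Base a /\
               A (mkneq (Base a) (Nm x) (Nm x))).

Definition dec_alts (tys : list (ty B)) (ss ts : list (tm N))
  : list (list (tm N)) :=
  map (fun p => mkneq (fst p) (fst (snd p)) (snd (snd p)) :: nil)
      (combine tys (combine ss ts)).

(* Admitted rule instances A / A_1 ... A_n of the calculus T, with
   A_i = ext A (alts_i).  Restrictions (1) and (2) are built in. *)
Inductive instance (A : branch) : list (list (tm N)) -> Prop :=
| R_DN s : ~ closed A -> A (mkneg (mkneg s)) ->
    instance A ((s :: nil) :: nil)
| R_BQ s t : ~ closed A -> A (mkeq (Base o) s t) ->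
    instance A ((s :: t :: nil) :: (mkneg s :: mkneg t :: nil) :: nil)
| R_BE s t : ~ closed A -> A (mkneq (Base o) s t) ->
    instance A ((s :: mkneg t :: nil) :: (mkneg s :: t :: nil) :: nil)
| R_FQ S T s t u : ~ closed A -> A (mkeq (Arr S T) s t) ->
    has_ty u S -> normal u ->
    instance A ((mkeq T (nf (Ap s u)) (nf (Ap t u)) :: nil) :: nil)
| R_FE S T s t x : ~ closed A -> A (mkneq (Arr S T) s t) ->
    isvar x -> nty x = S -> (forall f, A f -> ~ free x f) ->
    (forall y, isvar y -> nty y = S ->
       ~ A (mkneq T (nf (Ap s (Nm y))) (nf (Ap t (Nm y))))) ->
    instance A ((mkneq T (nf (Ap s (Nm x))) (nf (Ap t (Nm x))) :: nil) :: nil)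
| R_Mat x tys ss ts : (ss <> nil -> ~ closed A) ->
    isvar x -> nty x = arrows tys (Base o) ->
    length ss = length tys -> length ts = length tys ->
    A (apps (Nm x) ss) -> A (mkneg (apps (Nm x) ts)) ->
    instance A (dec_alts tys ss ts)
| R_Dec x a tys ss ts : (ss <> nil -> ~ closed A) ->
    isvar x -> sort a -> nty x = arrows tys (Base a) ->
    length ss = length tys -> length ts = length tys ->
    A (mkneq (Base a) (apps (Nm x) ss) (apps (Nm x) ts)) ->
    instance A (dec_alts tys ss ts)
| R_Con a s t u v : ~ closed A -> sort a ->
    A (mkeq (Base a) s t) -> A (mkneq (Base a) u v) ->
    instance A ((mkneq (Base a) s u :: mkneq (Base a) t u :: nil) ::
                (mkneq (Base a) s v :: mkneq (Base a) t v :: nil) :: nil).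

Inductive refutable : branch -> Prop :=
| ref_step A alts : fin_branch A -> instance A alts ->
    (forall F, In F alts -> refutable (ext A F)) -> refutable A.

Definition GammaT : branch -> Prop :=
  fun A => fin_branch A /\ ~ refutable A.

Definition acc (G : branch -> Prop) : Prop :=
  (forall A, G A -> is_branch A) /\
  forall A, G A ->
  (forall s, A (mkneg (mkneg s)) -> G (ext A (s :: nil))) /\
  (forall s t, A (mkeq (Base o) s t) ->
     G (ext A (s :: t :: nil)) \/ G (ext A (mkneg s :: mkneg t :: nil))) /\
  (forall s t, A (mkneq (Base o) s t) ->
     G (ext A (s :: mkneg t :: nil)) \/ G (ext A (mkneg s :: t :: nil))) /\
  (forall S T s t, A (mkeq (Arr S T) s t) ->
     forall u, has_ty u S -> normal u ->
     G (ext A (mkeq T (nf (Ap s u)) (nf (Ap t u)) :: nil))) /\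
  (forall S T s t, A (mkneq (Arr S T) s t) ->
     exists x, isvar x /\ nty x = S /\
       G (ext A (mkneq T (nf (Ap s (Nm x))) (nf (Ap t (Nm x))) :: nil))) /\
  (forall x tys ss ts, isvar x -> nty x = arrows tys (Base o) ->
     length ss = length tys -> length ts = length tys ->
     A (apps (Nm x) ss) -> A (mkneg (apps (Nm x) ts)) ->
     ss <> nil /\ exists F, In F (dec_alts tys ss ts) /\ G (ext A F)) /\
  (forall x a tys ss ts, isvar x -> sort a -> nty x = arrows tys (Base a) ->
     length ss = length tys -> length ts = length tys ->
     A (mkneq (Base a) (apps (Nm x) ss) (apps (Nm x) ts)) ->
     ss <> nil /\ exists F, In F (dec_alts tys ss ts) /\ G (ext A F)) /\
  (forall a s t u v, sort a ->
     A (mkeq (Base a) s t) -> A (mkneq (Base a) u v) ->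
     G (ext A (mkneq (Base a) s u :: mkneq (Base a) t u :: nil)) \/
     G (ext A (mkneq (Base a) s v :: mkneq (Base a) t v :: nil))).

End Setting.

(* Main.v *)
Require Import Defs.
From mathcomp Require Import ssreflect ssrfun ssrbool eqtype choice.
From Stdlib Require Import List Classical FunctionalExtensionality PropExtensionality.

Set Implicit Arguments.
Unset Strict Implicit.
Section Helpers.
Context {B : Type} (o : B) {N : Type} (nty : N -> ty B)
  (neg : N) (eqn : ty B -> N) (nf : tm N -> tm N)
  (Hneg : nty neg = Arr (Base o) (Base o))
  (Heqn : forall T, nty (eqn T) = Arr T (Arr T (Base o)))
  (Hinf : forall (T : ty B) (l : list N), exists x, nty x = T /\ ~ In x l)
  (Hnf_ty : forall s T, has_ty nty s T -> has_ty nty (nf s) T)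
  (Hnf_idem : forall s T, has_ty nty s T -> nf (nf s) = nf s)
  (Hnf_head : forall x ss b, has_ty nty (apps (Nm x) ss) (Base b) ->
       nf (apps (Nm x) ss) = apps (Nm x) (map nf ss)).

Lemma ty_uniq s T U : has_ty nty s T -> has_ty nty s U -> T = U.
Proof.
  move=> H; elim: H U => [x|s0 t0 T0 U0 H1 IH1 H2 IH2|x t0 U0 H IH] U' HU;
  inversion HU; subst => //.
  - have := IH1 _ H3. by case.
  - by rewrite (IH _ H3).
Qed.

Lemma ap_inv s t U : has_ty nty (Ap s t) U -> exists T, has_ty nty s (Arr T U) /\ has_ty nty t T.
Proof. move=> H; inversion H; subst; eauto. Qed.

Lemma nm_inv x U : has_ty nty (Nm x) U -> nty x = U.
Proof. move=> H; inversion H; subst; eauto. Qed.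

Lemma neg_inv s U : has_ty nty (mkneg neg s) U -> has_ty nty s (Base o) /\ U = Base o.
Proof.
  move=> /ap_inv [T [/nm_inv H1 H2]]. rewrite Hneg in H1; case: H1 => ? ?; subst; by [].
Qed.

Lemma eq_inv T s t U : has_ty nty (mkeq eqn T s t) U ->
  has_ty nty s T /\ has_ty nty t T /\ U = Base o.
Proof.
  move=> /ap_inv [T1 [/ap_inv [T2 [/nm_inv H1 H2]] H3]].
  rewrite Heqn in H1; case: H1 => ? ? ?; subst; by [].
Qed.

Lemma neq_inv T s t U : has_ty nty (mkneq neg eqn T s t) U ->
  has_ty nty s T /\ has_ty nty t T /\ U = Base o.
Proof.
  move=> /neg_inv [/eq_inv [? [? _]] ->]. by [].
Qed.

Lemma neg_ty s : has_ty nty s (Base o) -> has_ty nty (mkneg neg s) (Base o).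
Proof. move=> H; econstructor; [|exact H]. rewrite -Hneg; constructor. Qed.

Lemma eq_ty T s t : has_ty nty s T -> has_ty nty t T -> has_ty nty (mkeq eqn T s t) (Base o).
Proof.
  move=> H1 H2; econstructor; [|exact H2]. econstructor; [|exact H1].
  rewrite -Heqn; constructor.
Qed.

Lemma neq_ty T s t : has_ty nty s T -> has_ty nty t T -> has_ty nty (mkneq neg eqn T s t) (Base o).
Proof. move=> H1 H2; apply: neg_ty; exact: eq_ty. Qed.

Lemma neg_norm s : has_ty nty s (Base o) -> normal nf (mkneg neg s) -> normal nf s.
Proof.
  move=> Hs Hn. have Ht := neg_ty Hs.
  have := @Hnf_head neg (s::nil) _ Ht. rewrite /normal in Hn.
  rewrite /= in Hn *. rewrite /mkneg in Hn. rewrite Hn. case=> E; rewrite /normal; congruence.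
Qed.

Lemma eq_norm T s t : has_ty nty s T -> has_ty nty t T -> normal nf (mkeq eqn T s t) ->
  normal nf s /\ normal nf t.
Proof.
  move=> Hs Ht Hn. have H := eq_ty Hs Ht.
  have := @Hnf_head (eqn T) (s::t::nil) _ H. rewrite /normal /mkeq in Hn.
  rewrite /= in Hn *. rewrite Hn. case=> E1 E2; rewrite /normal; split; congruence.
Qed.

Lemma neq_norm T s t : has_ty nty s T -> has_ty nty t T -> normal nf (mkneq neg eqn T s t) ->
  normal nf s /\ normal nf t.
Proof.
  move=> Hs Ht Hn. apply: (eq_norm Hs Ht). exact: (neg_norm (eq_ty Hs Ht) Hn).
Qed.

Lemma neg_normI s : has_ty nty s (Base o) -> normal nf s -> normal nf (mkneg neg s).
Proof.
  move=> Hs Hn. have := @Hnf_head neg (s::nil) _ (neg_ty Hs).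
  rewrite /normal /= => ->. by rewrite Hn.
Qed.

Lemma eq_normI T s t : has_ty nty s T -> has_ty nty t T -> normal nf s -> normal nf t ->
   normal nf (mkeq eqn T s t).
Proof.
  move=> Hs Ht Ns Nt. have := @Hnf_head (eqn T) (s::t::nil) _ (eq_ty Hs Ht).
  rewrite /normal /= => ->. by rewrite Ns Nt.
Qed.

Lemma neq_normI T s t : has_ty nty s T -> has_ty nty t T -> normal nf s -> normal nf t ->
   normal nf (mkneq neg eqn T s t).
Proof.
  move=> Hs Ht Ns Nt. apply: neg_normI; first exact: eq_ty. exact: eq_normI.
Qed.

Lemma apps_ty h ss U : has_ty nty (apps h ss) U ->
  exists Ts, has_ty nty h (arrows Ts U) /\ Forall2 (has_ty nty) ss Ts.
Proof.
  elim: ss h => [|a l IH] h /=.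
  - move=> H; exists nil; split => //.
  - move=> /IH [Ts [H1 H2]]. inversion H1; subst.
    exists (T :: Ts); split => //. by constructor.
Qed.

Lemma apps_inj (h1 h2 : tm N) l1 l2 : apps h1 l1 = apps h2 l2 -> length l1 = length l2 ->
  h1 = h2 /\ l1 = l2.
Proof.
  elim: l1 h1 h2 l2 => [|a l IH] h1 h2 [|b l2] /=.
  - by move=> ->.
  - by [].
  - by [].
  - move=> /IH H [] /H [E ->]. case: E => -> ->. by [].
Qed.

Lemma arrows_inj (l1 l2 : list (ty B)) b1 b2 : length l1 = length l2 ->
  arrows l1 b1 = arrows l2 b2 -> l1 = l2.
Proof.
  elim: l1 l2 => [|a l IH] [|c l2] //= [] /IH H [] -> /H ->. by [].
Qed.

Lemma F2_norm ss Ts : Forall2 (has_ty nty) ss Ts -> map nf ss = ss ->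
  Forall2 (fun s T => has_ty nty s T /\ normal nf s) ss Ts.
Proof.
  elim=> [|s T l l' H1 H2 IH] //= [] Hs Hl. constructor; [split=>//|exact: IH].
Qed.

Lemma apps_info x tys ss b : nty x = arrows tys (Base b) -> length ss = length tys ->
  has_ty nty (apps (Nm x) ss) (Base b) -> normal nf (apps (Nm x) ss) ->
  Forall2 (fun s T => has_ty nty s T /\ normal nf s) ss tys.
Proof.
  move=> Hx Hl Ht Hn. have [Ts [H1 H2]] := apps_ty Ht.
  move/nm_inv: H1 => H1. rewrite H1 in Hx.
  have E : Ts = tys. apply: (arrows_inj _ Hx).
    by rewrite -(Forall2_length H2).
  subst. apply: F2_norm => //.
  have := Hnf_head Ht. rewrite Hn => E. have [_ E2] := apps_inj E (esym (length_map _ _)). exact: (esym E2).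
Qed.

Lemma combine_info ss ts tys p :
  Forall2 (fun s T => has_ty nty s T /\ normal nf s) ss tys ->
  Forall2 (fun s T => has_ty nty s T /\ normal nf s) ts tys ->
  In p (combine tys (combine ss ts)) ->
  has_ty nty (fst (snd p)) (fst p) /\ normal nf (fst (snd p)) /\
  has_ty nty (snd (snd p)) (fst p) /\ normal nf (snd (snd p)).
Proof.
  move=> H; elim: H ts => [|s T l l' [Hs Ns] H2 IH] ts H' //=.
  inversion H'; subst => /= [[<-|]] /=; first by [].
  exact: IH.
Qed.

Lemma closed_ref A : fin_branch o nty nf A -> closed o nty neg eqn A ->
  refutable o nty neg eqn nf A.
Proof.
  move=> HA [[x [Hx [Ht [H1 H2]]]]|[x [a [Hx [Ha [Ht H1]]]]]].
  - apply: (ref_step (alts:=nil)) => //.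
    apply: (@R_Mat _ _ _ _ _ _ _ _ x nil nil nil) => //.
  - apply: (ref_step (alts:=nil)) => //.
    apply: (@R_Dec _ _ _ _ _ _ _ _ x a nil nil nil) => //.
Qed.

Lemma ext_fin A F : fin_branch o nty nf A ->
  (forall u, In u F -> has_ty nty u (Base o) /\ normal nf u) ->
  fin_branch o nty nf (ext A F).
Proof.
  move=> [HA [l Hl]] HF; split.
  - move=> u [/HA|/HF] //.
  - exists (l ++ F) => u. rewrite in_app_iff /ext Hl. by [].
Qed.

Lemma ext_same (A : branch) (F : list (tm N)) : (forall u, In u F -> A u) -> ext A F = A.
Proof.
  move=> H; apply: functional_extensionality => u; apply: propositional_extensionality.
  rewrite /ext; split; [case=> //; exact: H|by left].
Qed.

Fixpoint names (t : tm N) : list N :=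
  match t with Nm y => y :: nil | Ap s u => names s ++ names u | Lm y u => y :: names u end.

Lemma free_names x t : free x t -> In x (names t).
Proof.
  elim: t => [y|s IHs u IHu|y u IH] /=; first by move=> ->; left.
  - rewrite in_app_iff; case; auto.
  - case=> _ /IH; auto.
Qed.

Definition fstarg (S : ty B) := match S with Arr T _ => T | _ => S end.


Lemma gen A alts : instance o nty neg eqn nf A alts -> fin_branch o nty nf A ->
  ~ refutable o nty neg eqn nf A ->
  (forall F, In F alts -> fin_branch o nty nf (ext A F)) ->
  exists F, In F alts /\ GammaT o nty neg eqn nf (ext A F).
Proof.
  move=> HI HA Hnr Hfin. apply: NNPP => Hne. apply: Hnr.
  apply: (ref_step HA HI) => F HF. apply: NNPP => Hr. apply: Hne.
  exists F; split => //; split => //; exact: Hfin.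
Qed.

Lemma main : acc o nty neg eqn nf (GammaT o nty neg eqn nf).
Proof.
  split; first by move=> A [[]].
  move=> A [HA Hnr].
  have Hnc : ~ closed o nty neg eqn A := fun c => Hnr (closed_ref HA c).
  have HAb := HA.1.
  split; [|split; [|split; [|split; [|split; [|split; [|split]]]]]].
  -
    move=> s H. have [Ht Hn] := HAb _ H.
    have [Ht1 _] := neg_inv Ht. have [Ht2 _] := neg_inv Ht1.
    have Hn1 := neg_norm Ht1 Hn. have Hn2 := neg_norm Ht2 Hn1.
    destruct (gen (R_DN nf Hnc H) HA Hnr) as [F [HF HG]].
    + move=> F [<-|[]]. apply: ext_fin => // u [<-|[]]. by [].
    + by case: HF => [E|[]]; subst.
  -
    move=> s t H. have [Ht Hn] := HAb _ H.
    have [Hs [Htt _]] := eq_inv Ht. have [Ns Nt] := eq_norm Hs Htt Hn.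
    destruct (gen (R_BQ nf Hnc H) HA Hnr) as [F [HF HG]].
    + move=> F [<-|[<-|[]]]; apply: ext_fin => // u [<-|[<-|[]]];
      split; try apply: neg_ty; try apply: neg_normI; done.
    + by case: HF => [E|[E|[]]]; subst; [left|right].
  -
    move=> s t H. have [Ht Hn] := HAb _ H.
    have [Hs [Htt _]] := neq_inv Ht. have [Ns Nt] := neq_norm Hs Htt Hn.
    destruct (gen (R_BE nf Hnc H) HA Hnr) as [F [HF HG]].
    + move=> F [<-|[<-|[]]]; apply: ext_fin => // u [<-|[<-|[]]];
      split; try apply: neg_ty; try apply: neg_normI; done.
    + by case: HF => [E|[E|[]]]; subst; [left|right].
  -
    move=> S T s t H u Hu Nu. have [Ht Hn] := HAb _ H.
    have [Hs [Htt _]] := eq_inv Ht.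
    have Hsu : has_ty nty (Ap s u) T by econstructor; eauto.
    have Htu : has_ty nty (Ap t u) T by econstructor; eauto.
    destruct (gen (R_FQ Hnc H Hu Nu) HA Hnr) as [F [HF HG]].
    + move=> F [<-|[]]. apply: ext_fin => // v [<-|[]]. split.
      * exact: (eq_ty (Hnf_ty Hsu) (Hnf_ty Htu)).
      * exact: (eq_normI (Hnf_ty Hsu) (Hnf_ty Htu) (Hnf_idem Hsu) (Hnf_idem Htu)).
    + by case: HF => [E|[]]; subst.
  -
    move=> S T s t H. have [Ht Hn] := HAb _ H.
    have [Hs [Htt _]] := neq_inv Ht.
    case: (classic (exists y, isvar neg eqn y /\ nty y = S /\
       A (mkneq neg eqn T (nf (Ap s (Nm y))) (nf (Ap t (Nm y)))))).
    + move=> [y [Hy [HyS HyA]]]. exists y; split => //; split => //.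
      rewrite ext_same; last by move=> v [<-|[]].
      by split.
    + move=> Hne.
      have [l Hl] := HA.2.
      have [x [Hx Hnin]] := Hinf S (neg :: eqn (fstarg S) :: flat_map names l).
      have Hvx : isvar neg eqn x.
        split; first by move=> E; apply: Hnin; left.
        move=> T0 E; apply: Hnin; right; left.
        have : nty x = Arr T0 (Arr T0 (Base o)) by rewrite E Heqn.
        rewrite Hx => ->. by rewrite E.
      have Hfr : forall f, A f -> ~ free x f.
        move=> f /Hl Hf /free_names Hxn; apply: Hnin; right; right.
        apply/in_flat_map; by exists f.
      have Hno : forall y, isvar neg eqn y -> nty y = S ->
          ~ A (mkneq neg eqn T (nf (Ap s (Nm y))) (nf (Ap t (Nm y)))).
        by move=> y Hy HyS HyA; apply: Hne; exists y.
      have Hxt : has_ty nty (Nm x) S by rewrite -Hx; constructor.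
      have Hsu : has_ty nty (Ap s (Nm x)) T by econstructor; eauto.
      have Htu : has_ty nty (Ap t (Nm x)) T by econstructor; eauto.
      exists x; split => //; split => //.
      destruct (gen (R_FE Hnc H Hvx Hx Hfr Hno) HA Hnr) as [F [HF HG]].
      * move=> F [<-|[]]. apply: ext_fin => // v [<-|[]]. split.
        -- exact: (neq_ty (Hnf_ty Hsu) (Hnf_ty Htu)).
        -- exact: (neq_normI (Hnf_ty Hsu) (Hnf_ty Htu) (Hnf_idem Hsu) (Hnf_idem Htu)).
      * by case: HF => [E|[]]; subst.
  -
    move=> x tys ss ts Hvx Hxt Hls Hlt H1 H2.
    have [Ht1 Hn1] := HAb _ H1. have [Ht2 Hn2] := HAb _ H2.
    have [Ht2' _] := neg_inv Ht2. have Hn2' := neg_norm Ht2' Hn2.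
    have I1 := apps_info Hxt Hls Ht1 Hn1.
    have I2 := apps_info Hxt Hlt Ht2' Hn2'.
    split.
    + move=> E; subst ss. destruct tys; [|discriminate]. destruct ts; [|discriminate].
      apply: Hnc; left; exists x; by [].
    + apply: gen => //; first exact: (R_Mat nf (fun _ => Hnc) Hvx Hxt Hls Hlt H1 H2).
      move=> F /in_map_iff [p [<- Hp]].
      have [Ha [Na [Hb Nb]]] := combine_info I1 I2 Hp.
      apply: ext_fin => // v [<-|[]]. split; [exact: neq_ty|exact: neq_normI].
  -
    move=> x a tys ss ts Hvx Ha Hxt Hls Hlt H1.
    have [Ht1 Hn1] := HAb _ H1.
    have [Hs [Htt _]] := neq_inv Ht1. have [Ns Nt] := neq_norm Hs Htt Hn1.
    have I1 := apps_info Hxt Hls Hs Ns.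
    have I2 := apps_info Hxt Hlt Htt Nt.
    split.
    + move=> E; subst ss. destruct tys; [|discriminate]. destruct ts; [|discriminate].
      apply: Hnc; right; exists x, a; by [].
    + apply: gen => //; first exact: (R_Dec nf (fun _ => Hnc) Hvx Ha Hxt Hls Hlt H1).
      move=> F /in_map_iff [p [<- Hp]].
      have [Hpa [Na [Hb Nb]]] := combine_info I1 I2 Hp.
      apply: ext_fin => // v [<-|[]]. split; [exact: neq_ty|exact: neq_normI].
  -
    move=> a s t u v Ha H1 H2.
    have [Ht1 Hn1] := HAb _ H1. have [Ht2 Hn2] := HAb _ H2.
    have [Hs [Htt _]] := eq_inv Ht1. have [Ns Nt] := eq_norm Hs Htt Hn1.
    have [Hu [Hv _]] := neq_inv Ht2. have [Nu Nv] := neq_norm Hu Hv Hn2.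
    destruct (gen (R_Con nf Hnc Ha H1 H2) HA Hnr) as [F [HF HG]].
    + move=> F [<-|[<-|[]]]; apply: ext_fin => // w [<-|[<-|[]]];
      split; try apply: neq_ty; try apply: neq_normI; done.
    + by case: HF => [E|[E|[]]]; subst; [left|right].
Qed.

End Helpers.

Theorem lemma9p1
  (B : countType) (o : B) (N : countType) (nty : N -> ty B)
  (neg : N) (eqn : ty B -> N) (nf : tm N -> tm N)
  (* logical constants *)
  (Hneg : nty neg = Arr (Base o) (Base o))
  (Heqn : forall T, nty (eqn T) = Arr T (Arr T (Base o)))
  (* infinitely many names of each type *)
  (Hinf : forall (T : ty B) (l : list N), exists x, nty x = T /\ ~ In x l)
  (* the normalization operator *)
  (Hnf_ty : forall s T, has_ty nty s T -> has_ty nty (nf s) T)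
  (Hnf_idem : forall s T, has_ty nty s T -> nf (nf s) = nf s)
  (Hnf_app : forall s t S T, has_ty nty s (Arr S T) -> has_ty nty t S ->
       nf (Ap (nf s) t) = nf (Ap s t))
  (Hnf_head : forall x ss b, has_ty nty (apps (Nm x) ss) (Base b) ->
       nf (apps (Nm x) ss) = apps (Nm x) (map nf ss)) :
  acc o nty neg eqn nf (GammaT o nty neg eqn nf).
Proof.
  exact: (main Hneg Heqn Hinf Hnf_ty Hnf_idem Hnf_head).
Qed.
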